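(* Let $t\geq 1$ be an integer, $m=8t+4$, $n=2^m+1$, and let $\delta_1,\dots,\delta_5$ be defined as follows: $\delta_1=\frac{3n}{17}$; if $t=1$, $\delta_2=\delta_1-6$, $\delta_3=\delta_2-24$, $\delta_4=\delta_3-2$, $\delta_5=\delta_4-38$; if $t=2$, $\delta_2=\delta_1-\frac{\delta_1+45}{128}$, $\delta_3=\delta_2-90$, $\delta_4=\delta_3-6$, $\delta_5=\delta_4-384$; if $t\geq 3$, $\delta_2=\delta_1-\frac{\delta_1+45}{128}$, $\delta_3=\delta_2-90$, $\delta_4=\delta_3-22950$, $\delta_5=\delta_4-90$. If $1\leq x\leq 2^{4t+3}+2^{4t+2}+2^{4t+1}+1$ or $x\in\{\delta_2,\delta_3,\delta_4,\delta_5\}$, then $|C_x|=2m$. Moreover $|C_{\delta_1}|=8$.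
   Context: For $n=2^m+1$ and an integer $x$, the 2-cyclotomic coset of $x$ modulo $n$ is $C_x=\{x\cdot 2^{j} \bmod n : j\geq 0\}\subseteq\{0,1,\dots,n-1\}$, and $|C_x|$ its cardinality. *)

(* Defs.v *)
From mathcomp Require Import all_boot.
Set Implicit Arguments. Unset Strict Implicit. Unset Printing Implicit Defensive.

(* The exponents j are
   taken in 0 <= j < n; for odd n this is no restriction, since the
   sequence j |-> x*2^j mod n is periodic with period ord_n(2) <= n - 1. *)
Definition cyc_coset (n x : nat) : seq nat :=
  undup [seq (x * 2 ^ j) %% n | j <- iota 0 n].

Definition cyc_coset_card (n x : nat) : nat := size (cyc_coset n x).

Definition mm (t : nat) : nat := 8 * t + 4.
Definition nn (t : nat) : nat := 2 ^ mm t + 1.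

(* delta_1 = 3n/17 (an integer, since 17 | n). *)
Definition delta1 (t : nat) : nat := 3 * nn t %/ 17.
Definition delta2 (t : nat) : nat :=
  if t == 1 then delta1 t - 6 else delta1 t - (delta1 t + 45) %/ 128.
Definition delta3 (t : nat) : nat :=
  if t == 1 then delta2 t - 24 else delta2 t - 90.
Definition delta4 (t : nat) : nat :=
  if t == 1 then delta3 t - 2 else if t == 2 then delta3 t - 6
  else delta3 t - 22950.
Definition delta5 (t : nat) : nat :=
  if t == 1 then delta4 t - 38 else if t == 2 then delta4 t - 384
  else delta4 t - 90.

(* Main.v *)
Require Import Defs.
From mathcomp Require Import all_boot zify.

Lemma mod_cancel n c a b : coprime n c ->
  (a * c == b * c %[mod n]) = (a == b %[mod n]).
Proof.
move=> cnc.
wlog le_ba : a b / b <= a.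
  move=> W; case: (leqP b a) => h; first exact: W.
  by rewrite eq_sym [RHS]eq_sym W // ltnW.
rewrite !eqn_mod_dvd ?leq_mul2r ?le_ba ?orbT // -mulnBl Gauss_dvdl //.
Qed.

Lemma modMr n a b c : a = b %[mod n] -> a * c = b * c %[mod n].
Proof. by move=> h; rewrite -modnMml h modnMml. Qed.

Lemma iter_mod n x e k : x * 2 ^ e = x %[mod n] -> x * 2 ^ (e * k) = x %[mod n].
Proof.
move=> h; elim: k => [|k IH]; first by rewrite muln0 expn0 muln1.
by rewrite mulnS addnC expnD mulnA (modMr _ _ _ (2 ^ e) IH).
Qed.

Lemma period_mod n x p j : x * 2 ^ p = x %[mod n] ->
  x * 2 ^ j = x * 2 ^ (j %% p) %[mod n].
Proof.
move=> h; rewrite {1}(divn_eq j p) expnD mulnA; apply: modMr.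
by rewrite [_ %/ _ * _]mulnC iter_mod.
Qed.

Lemma card_period n x p : odd n -> 0 < p <= n -> x * 2 ^ p = x %[mod n] ->
  (forall d, 0 < d < p -> x * 2 ^ d != x %[mod n]) -> cyc_coset_card n x = p.
Proof.
move=> on /andP[p0 pn] hp hd.
have cn : forall i, coprime n (2 ^ i) by move=> i; apply: coprimeXr; rewrite coprimen2.
rewrite /cyc_coset_card /cyc_coset.
transitivity (size [seq (x * 2 ^ j) %% n | j <- iota 0 p]); last by rewrite size_map size_iota.
apply: perm_size; apply: uniq_perm; first exact: undup_uniq.
  rewrite map_inj_in_uniq ?iota_uniq // => i j; rewrite !mem_iota !add0n => /andP[_ ip] /andP[_ jp].
  wlog le_ij : i j ip jp / i <= j.
    move=> W e; case: (leqP i j) => h; first exact: W.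
    by apply/esym/W => //; rewrite ltnW.
  move=> e; move: le_ij; rewrite leq_eqVlt => /orP[/eqP//|lt_ij]; exfalso.
  have hji : 0 < j - i < p by apply/andP; split; [rewrite subn_gt0 | exact: leq_ltn_trans (leq_subr i j) jp].
  have := hd _ hji.
  rewrite -(mod_cancel n (2 ^ i) (x * 2 ^ (j - i)) x (cn i)) -mulnA -expnD (subnK (ltnW lt_ij)).
  rewrite -e eqxx; exact: id.
move=> y; rewrite mem_undup; apply/mapP/mapP => -[j]; rewrite !mem_iota !add0n => jr ->.
  exists (j %% p); first by rewrite mem_iota add0n ltn_mod.
  exact: period_mod.
by exists j => //; rewrite mem_iota add0n (leq_trans jr pn).
Qed.

Lemma full_period m y : y * 2 ^ (2 * m) = y %[mod 2 ^ m + 1].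
Proof.
have E1 : 1 <= 2 ^ m by rewrite expn_gt0.
have -> : y * 2 ^ (2 * m) = (y * (2 ^ m - 1)) * (2 ^ m + 1) + y.
  rewrite mulnC expnM.
  set E := 2 ^ m. rewrite -/E in E1.
  have -> : (2 ^ 2) ^ m = E * E by rewrite -expnM mulnC expnM.
  case: E E1 => // F _; rewrite subn1 /=. nia.
by rewrite modnMDl.
Qed.

Lemma half_kill m e y : 0 < m -> e %| m -> y * 2 ^ e = y %[mod 2 ^ m + 1] ->
  2 ^ m + 1 %| y.
Proof.
move=> m0 /dvdnP[k ekm]; rewrite ekm => h.
have h2 := iter_mod _ _ _ k h; rewrite [e * k]mulnC in h2.
have odn : odd (2 ^ (k * e) + 1) by rewrite oddD oddX eqn0Ngt -ekm m0.
have c2 : coprime (2 ^ (k * e) + 1) 2 by rewrite coprimen2.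
rewrite -(Gauss_dvdl y c2).
rewrite /dvdn muln2 -addnn -modnDml -h2 modnDml -{2}[y]muln1 -mulnDr modnMl //.
Qed.

Lemma key m x : 0 < m ->
  (forall d, d %| m -> ~~ (d.*2 %| m) -> d < m -> ~~ (2 ^ m + 1 %| x * (2 ^ d + 1))) ->
  ~~ (2 ^ m + 1 %| x) -> cyc_coset_card (2 ^ m + 1) x = 2 * m.
Proof.
move=> m0 H nx.
apply: card_period.
- by rewrite oddD oddX eqn0Ngt m0.
- apply/andP; split; first by rewrite muln_gt0 m0.
  have := ltn_expl m.-1 (isT : 1 < 2).
  move=> hh; have e : 2 ^ m = 2 * 2 ^ m.-1 by rewrite -expnS prednK.
  lia.
- exact: full_period.
move=> d /andP[d0 d2m]; apply/negP => /eqP hd.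
have [a _ ha] := Bezoutl (2 * m) d0.
set g := gcdn d (2 * m) in ha.
have hg : x * 2 ^ g = x %[mod 2 ^ m + 1].
  move/dvdnP: ha => [k hk].
  have e1 : x * 2 ^ (g + a * (2 * m)) = x %[mod 2 ^ m + 1].
    by rewrite hk [k * d]mulnC; apply: iter_mod.
  rewrite expnD mulnA [a * _]mulnC iter_mod in e1 => //.
  exact: full_period.
have g0 : 0 < g by rewrite gcdn_gt0 d0.
have gd : g <= d by apply: dvdn_leq d0 (dvdn_gcdl _ _).
have g2m : g %| 2 * m := dvdn_gcdr _ _.
case: (boolP (g %| m)) => gm.
  by move: nx; rewrite (half_kill _ _ _ m0 gm hg).
have og : ~~ odd g.
  apply: contra gm => og.
  have cg : coprime g 2 by rewrite coprimen2.
  by rewrite -(Gauss_dvdr m cg).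
set h := g./2.
have gh : g = h.*2 by rewrite -[LHS]odd_double_half (negbTE og).
have hm : h %| m.
  by move: g2m; rewrite gh -muln2 mulnC dvdn_pmul2l.
clearbody h g.
have hm2 : ~~ (h.*2 %| m) by rewrite -gh.
have hlt : h < m by rewrite -ltn_double -gh -mul2n (leq_ltn_trans gd d2m).
have := H h hm hm2 hlt; apply/negP/negPn.
apply: (half_kill _ _ _ m0 hm).
rewrite mulnDr muln1 mulnDl -mulnA -expnD addnn -gh.
by rewrite -modnDml hg modnDml addnC.
Qed.

Lemma seventeen e : odd e -> 17 %| 2 ^ (4 * e) + 1.
Proof.
move=> oe; rewrite -(odd_double_half e) oe /= -muln2 mulnDr muln1 expnD.
rewrite (_ : 4 * (e./2 * 2) = 8 * e./2); last by lia.
by rewrite expnM /dvdn -modnDml -modnMmr -(modnXm e./2 _ (2 ^ 8)) (_ : 2 ^ 8 %% 17 = 1) // exp1n.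
Qed.

Lemma d_facts t d : d %| mm t -> ~~ (d.*2 %| mm t) -> d < mm t ->
  exists e, [/\ d = 4 * e, odd e & 12 * e <= mm t].
Proof.
rewrite /mm => /dvdnP[k hk] nd dm.
have ok : odd k.
  apply: contraR nd => ek; apply/dvdnP; exists k./2.
  have := odd_double_half k; rewrite (negbTE ek) add0n -!muln2 => hk2.
  by rewrite hk -{1}hk2 -mulnA [2 * d]mulnC mulnA.
have k3 : 3 <= k by case: k hk ok => [|[|[|k]]] hk ok //; rewrite ?mul0n ?mul1n in hk; lia.
have c4 : coprime 4 k by rewrite (_ : 4 = 2 ^ 2) // coprime_pexpl // coprime2n.
have d4 : 4 %| d.
  by rewrite -(Gauss_dvdr d c4) -hk (_ : 8 * t + 4 = (2 * t + 1) * 4) ?dvdn_mull //; lia.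
move/dvdnP: d4 => [e he]; exists e; split.
- by rewrite he mulnC.
- have : odd (e * k) by rewrite (_ : e * k = 2 * t + 1) ?oddD ?odd_mul ?andbF //; nia.
  by rewrite oddM => /andP[].
- nia.
Qed.

Lemma key2 t x : 1 <= t ->
  (forall e, odd e -> 12 * e <= mm t -> ~~ (nn t %| x * (2 ^ (4 * e) + 1))) ->
  cyc_coset_card (nn t) x = 2 * mm t.
Proof.
move=> t1 H; rewrite /nn; apply: key.
- by rewrite /mm addn4.
- move=> d dm nd ltd; have [e [-> oe he]] := d_facts _ _ dm nd ltd; exact: H.
apply: contraNN (H 1 isT _); last by rewrite /mm; lia.
by rewrite /nn; apply: dvdn_mulr.
Qed.

Lemma delta_ok n K W D X d : n + 255 * 257 = 17 * 256 * 256 * K -> 0 < K ->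
  d + D = 3 * 256 * 256 * K - 45 * 257 -> 128 * 17 * D = 3 * n + X ->
  0 < X * W -> X * W < n -> ~~ (n %| d * (17 * W)).
Proof.
move=> hn K0 hd hD p1 p2; apply/negP => dv.
have e1 : (d + D) * 17 = n * 3 by lia.
have h1 : n %| (d + D) * (17 * W) by rewrite mulnA e1 -mulnA dvdn_mulr.
rewrite mulnDl dvdn_addr // in h1.
have h2 : n %| 128 * (D * (17 * W)) by apply: dvdn_mull.
have e2 : 128 * (D * (17 * W)) = n * (3 * W) + X * W.
  have -> : 128 * (D * (17 * W)) = (128 * 17 * D) * W by nia.
  by rewrite hD; nia.
move: h2; rewrite e2 dvdn_addr; last exact: dvdn_mulr.
move=> h2.
by move: (dvdn_leq p1 h2); rewrite leqNgt p2.
Qed.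

Lemma K_ex t : 2 <= t -> exists K, [/\ 0 < K, nn t + 255 * 257 = 17 * 256 * 256 * K
  & 2 ^ mm t + 256 * 256 = 17 * 256 * 256 * K].
Proof.
move=> t2.
have o : odd (2 * t - 3) by rewrite (_ : 2 * t - 3 = (t - 2) * 2 + 1) ?addn1 /= ?odd_mul ?andbF //; lia.
have /dvdnP[K hK] := seventeen _ o.
have hm : mm t = 8 + 8 + 4 * (2 * t - 3) by rewrite /mm; lia.
have h8 : 2 ^ 8 = 256 by [].
have hP : 2 ^ mm t = 256 * 256 * 2 ^ (4 * (2 * t - 3)) by rewrite hm !expnD h8.
exists K; split.
- by case: K hK => //; rewrite mul0n addn1.
- rewrite /nn hP; lia.
- rewrite hP; lia.
Qed.

Lemma expn_mono a b : a <= b -> 2 ^ a <= 2 ^ b.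
Proof. by move=> h; rewrite leq_pexp2l. Qed.

Ltac fin K hn K0 W0 hB D X := apply: (delta_ok _ K _ D X _ hn K0);
  [lia | lia | by rewrite muln_gt0 W0 | apply: hB; lia].

Theorem lemma5p3 (t : nat) (ht : 1 <= t) :
  (forall x : nat,
     (1 <= x <= 2 ^ (4 * t + 3) + 2 ^ (4 * t + 2) + 2 ^ (4 * t + 1) + 1)
     \/ x \in [:: delta2 t; delta3 t; delta4 t; delta5 t] ->
     cyc_coset_card (nn t) x = 2 * mm t)
  /\ cyc_coset_card (nn t) (delta1 t) = 8.
Proof.
split.
  move=> x hx; apply: key2 => // e oe he.
  have e0 : 0 < e by case: e oe {he}.
  have [W hW] : exists W, 2 ^ (4 * e) + 1 = 17 * W.
    by move/dvdnP: (seventeen _ oe) => [W ->]; exists W; rewrite mulnC.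
  case: hx => [/andP[x1 xb] | hx].
    rewrite /nn; apply/negP => dv.
    have p0 : 0 < x * (2 ^ (4 * e) + 1) by rewrite muln_gt0 x1 addn1.
    move: (dvdn_leq p0 dv) => {dv p0}.
    have hA : 2 ^ mm t = 4 * 2 ^ (4 * t + 1) * 2 ^ (4 * t + 1).
      by rewrite (_ : 4 = 2 ^ 2) // -!expnD /mm; congr (2 ^ _); lia.
    have e3 : 2 ^ (4 * t + 3) = 4 * 2 ^ (4 * t + 1).
      by rewrite (_ : 4 * t + 3 = 2 + (4 * t + 1)) ?expnD // addnCA.
    have e2 : 2 ^ (4 * t + 2) = 2 * 2 ^ (4 * t + 1).
      by rewrite (_ : 4 * t + 2 = 1 + (4 * t + 1)) ?expnD // addnCA.
    have hb : x <= 7 * 2 ^ (4 * t + 1) + 1.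
      move: xb; rewrite e3 e2; move: (2 ^ (4 * t + 1)) => B; lia.
    rewrite hA; move: hb {hA xb e2 e3}.
    have [t1|t2] : t = 1 \/ 2 <= t by lia.
      move: he; rewrite /mm t1 => he.
      have e1 : e = 1 by lia.
      by rewrite e1 (_ : 2 ^ (4 * 1 + 1) = 32) // (_ : 2 ^ (4 * 1) = 16) //; lia.
    have h32 : 32 * 2 ^ (4 * e) <= 2 ^ (4 * t + 1).
      rewrite (_ : 32 = 2 ^ 5) // -expnD expn_mono //.
      by move: he; rewrite /mm; lia.
    have h512 : 512 <= 2 ^ (4 * t + 1).
      by rewrite (_ : 512 = 2 ^ 9) // expn_mono //; lia.
    move: h32 h512; move: (2 ^ (4 * t + 1)) (2 ^ (4 * e)) => A E h32 h512 hb h3.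
    have h1 : 512 * A <= A * A by rewrite leq_mul2r h512 orbT.
    have h4 : x * E <= (7 * A + 1) * E by rewrite leq_mul2r hb orbT.
    have h5 : 32 * ((7 * A + 1) * E) <= (7 * A + 1) * A.
      by rewrite mulnCA leq_mul2l h32 orbT.
    clear -h1 h4 h5 h3 hb h512; nia.
  rewrite hW.
  have W0 : 0 < W by case: W hW; rewrite ?muln0 ?addn1.
  have [t1|t2] : t = 1 \/ 2 <= t by lia.
    move: he; rewrite /mm t1 => he.
    have e1 : e = 1 by lia.
    move: hW; rewrite e1 (_ : 2 ^ (4 * 1) = 16) // => hW.
    have -> : W = 1 by lia.
    rewrite t1 !inE in hx.
    have hn1 : nn 1 = 4097 by [].
    have h1 : delta1 1 = 723 by rewrite /delta1 hn1 (_ : 3 * 4097 = 723 * 17) // mulnK.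
    have h2 : delta2 1 = 717 by rewrite /delta2 h1.
    have h3 : delta3 1 = 693 by rewrite /delta3 h2.
    have h4 : delta4 1 = 691 by rewrite /delta4 h3.
    have h5 : delta5 1 = 653 by rewrite /delta5 h4.
    rewrite hn1.
    by case/or4P: hx => /eqP ->; rewrite ?h2 ?h3 ?h4 ?h5; lia.
  have [K [K0 hn hP]] := K_ex _ t2.
  have tn1 : (t == 1) = false by apply/eqP; lia.
  have hd1 : delta1 t = 3 * 256 * 256 * K - 45 * 257.
    rewrite /delta1 (_ : 3 * nn t = (3 * 256 * 256 * K - 45 * 257) * 17) ?mulnK //; lia.
  have hd2 : delta2 t + (6 * 256 * K - 90) = delta1 t.
    rewrite /delta2 tn1 (_ : delta1 t + 45 = (6 * 256 * K - 90) * 128) ?mulnK //; lia.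
  have hd3 : delta3 t + 90 = delta2 t by rewrite /delta3 tn1; lia.
  rewrite !inE in hx.
  have [t2e|t3] : t = 2 \/ 3 <= t by lia.
    have e1 : e = 1 by move: he; rewrite /mm t2e; clear hW; case: e oe e0 => [|[|[|e]]] //; lia.
    move: hW; rewrite e1 (_ : 2 ^ (4 * 1) = 16) // => hW.
    have W1 : W = 1 by lia.
    have K1 : K = 1.
      move: hP; rewrite /mm t2e (_ : 8 * 2 + 4 = 8 + 8 + 4) // !expnD (_ : 2 ^ 8 = 256) //.
      rewrite (_ : 2 ^ 4 = 16) //; lia.
    have hB : forall X, X <= 3 * 255 * 257 + 2176 * 390 -> X * W < nn t.
      by move=> X hX; rewrite W1 muln1; lia.
    have tn2 : (t == 2) = true by apply/eqP.
    have hd4 : delta4 t + 6 = delta3 t by rewrite /delta4 tn1 tn2; lia.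
    have hd5 : delta5 t + 384 = delta4 t by rewrite /delta5 tn1 tn2; lia.
    case/or4P: hx => /eqP ->.
    - fin K hn K0 W0 hB (6 * 256 * K - 90) (3 * 255).
    - fin K hn K0 W0 hB (6 * 256 * K) (3 * 255 * 257).
    - fin K hn K0 W0 hB (6 * 256 * K + 6) (3 * 255 * 257 + 2176 * 6).
    - fin K hn K0 W0 hB (6 * 256 * K + 390) (3 * 255 * 257 + 2176 * 390).
  have hB : forall X, X <= 3 * 255 * 257 + 2176 * (90 * 256) -> X * W < nn t.
    move=> X hX.
    have hXW : X * W <= (3 * 255 * 257 + 2176 * (90 * 256)) * W by rewrite leq_mul2r hX orbT.
    have [t3e|t4] : t = 3 \/ 4 <= t by lia.
      have e1 : e = 1 by move: he; rewrite /mm t3e; clear hW; case: e oe e0 => [|[|[|e]]] //; lia.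
      move: hW; rewrite e1 (_ : 2 ^ (4 * 1) = 16) // => hW.
      have W1 : W = 1 by lia.
      have K1 : K = 241.
        move: hP; rewrite /mm t3e (_ : 8 * 3 + 4 = 8 + 8 + 8 + 4) // !expnD (_ : 2 ^ 8 = 256) //.
        rewrite (_ : 2 ^ 4 = 16) //; lia.
      rewrite W1 muln1 in hXW; lia.
    have hE : 2 ^ (4 * e) * (2 ^ 8 * 2 ^ 8 * 2 ^ 7) <= 2 ^ mm t.
      by rewrite -!expnD expn_mono //; move: he; rewrite /mm; lia.
    rewrite (_ : 2 ^ 8 = 256) // (_ : 2 ^ 7 = 128) // in hE.
    move: hE hW hP hn hXW; move: (2 ^ (4 * e)) (2 ^ mm t) => E M.
    clear; lia.
  have tn2 : (t == 2) = false by apply/eqP; lia.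
  have hd4 : delta4 t + 90 * 255 = delta3 t.
    by rewrite /delta4 tn1 tn2 (_ : 22950 = 90 * 255) //; lia.
  have hd5 : delta5 t + 90 = delta4 t by rewrite /delta5 tn1 tn2; lia.
  case/or4P: hx => /eqP ->.
  - fin K hn K0 W0 hB (6 * 256 * K - 90) (3 * 255).
  - fin K hn K0 W0 hB (6 * 256 * K) (3 * 255 * 257).
  - fin K hn K0 W0 hB (6 * 256 * K + 90 * 255) (3 * 255 * 257 + 2176 * (90 * 255)).
  - fin K hn K0 W0 hB (6 * 256 * K + 90 * 256) (3 * 255 * 257 + 2176 * (90 * 256)).
have [N1 hN] : exists N1, nn t = 17 * N1.
  have o : odd (2 * t + 1) by rewrite oddD oddM.
  move/dvdnP: (seventeen _ o) => [N1 h]; exists N1.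
  rewrite /nn /mm (_ : 8 * t + 4 = 4 * (2 * t + 1)); first by rewrite h mulnC.
  lia.
have N0 : 0 < N1 by case: N1 hN; rewrite ?muln0 /nn ?addn1.
have hd : delta1 t = 3 * N1 by rewrite /delta1 hN mulnCA mulKn.
rewrite hd hN; apply: card_period.
- by rewrite -hN /nn oddD oddX /mm addn4.
- apply/andP; split => //; lia.
- have -> : 3 * N1 * 2 ^ 8 = (45 * N1) * 17 + 3 * N1.
    by rewrite (_ : 2 ^ 8 = 256) //; lia.
  by rewrite -mulnA [N1 * 17]mulnC modnMDl.
move=> d /andP[d0 d8].
rewrite eqn_mod_dvd; last by rewrite leq_pmulr // expn_gt0.
rewrite -{2}[3 * N1]muln1 -mulnBr mulnAC dvdn_pmul2r //.
by case: d d0 d8 => [|[|[|[|[|[|[|[|d]]]]]]]].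
Qed.
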